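(* Let $\beta>0$ and $V\in\mathbb R^{d\times d}$ be real symmetric with orthonormal eigenbasis $(e_k)$ and eigenvalues $(\lambda_k)$. Consider, for $x_i(t)\in\mathbb S^{d-1}$, $i\in[n]$, the system \[ \dot x_i=P^\perp_{x_i}\Big(\frac1{Z_i}\sum_{j=1}^n e^{\beta\langle x_i,Vx_j\rangle}Vx_j\Big),\qquad Z_i=\sum_{k=1}^n e^{\beta\langle x_i,Vx_k\rangle},\qquad P^\perp_xy=y-\langle x,y\rangle x. \] Let $s_1,\dots,s_n\in\{-1,1\}$ with $|\{i:s_i=1\}|=|\{i:s_i=-1\}|$, and suppose $x_i(0)=s_iu_0$ for all $i$, for some $u_0\in\mathbb S^{d-1}$. Then there exists $u(t)\in\mathbb S^{d-1}$ with $x_i(t)=s_iu(t)$ for all $t\ge0$ and $i\in[n]$ (i.e. the balanced bipolar manifold $\{X: \exists u\in\mathbb S^{d-1},\ x_i=s_iu\ \forall i\}$, with balanced signs, is invariant), and writing $u(t)=\sum_k u_k(t)e_k$ and $M(t)=\sum_{l=1}^d\lambda_lu_l(t)^2$, one has \[ \dot u_k=u_k\tanh(\beta M)(\lambda_k-M),\qquad k\in[d],\ t\ge0. \] *)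

(* Defs.v *)
From HB Require Import structures.
From mathcomp Require Import all_boot all_order all_algebra.
From mathcomp Require Import all_classical all_reals all_analysis.
Set Implicit Arguments. Unset Strict Implicit. Unset Printing Implicit Defensive.
Import Order.TTheory GRing.Theory Num.Theory.
Import numFieldNormedType.Exports.
Local Open Scope ring_scope.

Section Defs.
Variables (R : realType) (d : nat).

Definition dotv (x y : 'cV[R]_d) : R := \sum_(r < d) x r ord0 * y r ord0.

Definition proj_perp (x y : 'cV[R]_d) : 'cV[R]_d := y - dotv x y *: x.

Definition on_sphere (x : 'cV[R]_d) : Prop := dotv x x = 1.

Definition tanh (z : R) : R := (expR z - expR (- z)) / (expR z + expR (- z)).

Definition attn_Z n (beta : R) (V : 'M[R]_d) (x : 'I_n -> 'cV[R]_d) (i : 'I_n) : R :=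
  \sum_(k < n) expR (beta * dotv (x i) (V *m x k)).

Definition attn_rhs n (beta : R) (V : 'M[R]_d) (x : 'I_n -> 'cV[R]_d) (i : 'I_n)
  : 'cV[R]_d :=
  proj_perp (x i)
    ((attn_Z beta V x i)^-1 *:
       \sum_(j < n) (expR (beta * dotv (x i) (V *m x j)) *: (V *m x j))).

End Defs.

(* Main.v *)
Require Import Defs.
From HB Require Import structures.
From mathcomp Require Import all_boot all_order all_algebra.
From mathcomp Require Import all_classical all_reals all_analysis.
From mathcomp Require Import ring lra.
Import Order.TTheory GRing.Theory Num.Theory.
Import numFieldNormedType.Exports.
Local Open Scope ring_scope.

Module Aux.
Set Implicit Arguments. Unset Strict Implicit. Unset Printing Implicit Defensive.

Section ScalarSums.
Variable R : realType.

Lemma sumc_ord (m : nat) (c : R) : \sum_(j < m) c = c *+ m.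
Proof. by rewrite sumr_const card_ord. Qed.

Lemma sum2D (m : nat) (g h : 'I_m -> 'I_m -> R) :
  \sum_(i < m) \sum_(j < m) (g i j + h i j) =
  \sum_(i < m) \sum_(j < m) g i j + \sum_(i < m) \sum_(j < m) h i j.
Proof. by rewrite -big_split; apply: eq_bigr => i _; rewrite -big_split. Qed.

Lemma sum2B (m : nat) (g h : 'I_m -> 'I_m -> R) :
  \sum_(i < m) \sum_(j < m) (g i j - h i j) =
  \sum_(i < m) \sum_(j < m) g i j - \sum_(i < m) \sum_(j < m) h i j.
Proof. by rewrite -sumrB; apply: eq_bigr => i _; rewrite -sumrB. Qed.

Lemma sum2_sym (m : nat) (g : 'I_m -> R) :
  \sum_(i < m) \sum_(j < m) (g i + g j) = (\sum_(j < m) g j) *+ (2 * m).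
Proof.
have -> : \sum_(i < m) \sum_(j < m) (g i + g j) =
   \sum_(i < m) \sum_(j < m) g i + \sum_(i < m) \sum_(j < m) g j.
  by rewrite -big_split; apply: eq_bigr => i _; rewrite -big_split.
have -> : \sum_(i < m) \sum_(j < m) g i = \sum_(i < m) g i *+ m.
  by apply: eq_bigr => i _; rewrite sumc_ord.
rewrite sumrMnl sumc_ord mulnC mulrnA mulr2n //.
Qed.

Lemma sum_sq_le (m : nat) (f : 'I_m -> R) :
  (\sum_(j < m) f j) ^+ 2 <= m%:R * \sum_(j < m) f j ^+ 2.
Proof.
have E : (\sum_(j < m) f j) ^+ 2 = \sum_(i < m) \sum_(j < m) f i * f j.
  by rewrite expr2 mulr_suml; apply: eq_bigr => i _; rewrite mulr_sumr.
have E2 : m%:R * \sum_(j < m) f j ^+ 2 =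
   \sum_(i < m) \sum_(j < m) (f i ^+ 2 + f j ^+ 2) / 2.
  transitivity ((\sum_(i < m) \sum_(j < m) (f i ^+ 2 + f j ^+ 2)) / 2); last first.
    by rewrite mulr_suml; apply: eq_bigr => i _; rewrite mulr_suml.
  by rewrite sum2_sym mulnC mulrnA mulr2n -mulr_natl; field.
rewrite E E2; apply: ler_sum => i _; apply: ler_sum => j _.
have := sqr_ge0 (f i - f j); lra.
Qed.

Lemma cauchy_schwarz (m : nat) (f g : 'I_m -> R) :
  (\sum_(j < m) f j * g j) ^+ 2 <=
  (\sum_(j < m) f j ^+ 2) * (\sum_(j < m) g j ^+ 2).
Proof.
have L : \sum_(i < m) \sum_(j < m) (f i * g j - f j * g i) ^+ 2 =
  2 * ((\sum_(j < m) f j ^+ 2) * (\sum_(j < m) g j ^+ 2) -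
       (\sum_(j < m) f j * g j) ^+ 2).
  have -> : \sum_(i < m) \sum_(j < m) (f i * g j - f j * g i) ^+ 2 =
     \sum_(i < m) \sum_(j < m) (f i ^+ 2 * g j ^+ 2 + f j ^+ 2 * g i ^+ 2
        - 2 * ((f i * g i) * (f j * g j))).
    by apply: eq_bigr => i _; apply: eq_bigr => j _; ring.
  rewrite sum2B sum2D.
  have A1 : \sum_(i < m) \sum_(j < m) f i ^+ 2 * g j ^+ 2 =
     (\sum_(j < m) f j ^+ 2) * (\sum_(j < m) g j ^+ 2).
    by rewrite mulr_suml; apply: eq_bigr => i _; rewrite mulr_sumr.
  have A2 : \sum_(i < m) \sum_(j < m) f j ^+ 2 * g i ^+ 2 =
     (\sum_(j < m) f j ^+ 2) * (\sum_(j < m) g j ^+ 2).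
    by rewrite exchange_big /= A1.
  have A3 : \sum_(i < m) \sum_(j < m) 2 * (f i * g i * (f j * g j)) =
     2 * (\sum_(j < m) f j * g j) ^+ 2.
    rewrite expr2 mulr_suml mulr_sumr; apply: eq_bigr => i _.
    rewrite mulr_sumr mulr_sumr; apply: eq_bigr => j _; ring.
  rewrite A1 A2 A3. ring.
have : 0 <= \sum_(i < m) \sum_(j < m) (f i * g j - f j * g i) ^+ 2.
  by apply: sumr_ge0 => i _; apply: sumr_ge0 => j _; apply: sqr_ge0.
rewrite L; lra.
Qed.

End ScalarSums.

Section Dot.
Variables (R : realType) (d : nat).
Implicit Types x y z : 'cV[R]_d.

Lemma dotvC x y : dotv x y = dotv y x.
Proof. by rewrite /dotv; apply: eq_bigr => r _; rewrite mulrC. Qed.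

Lemma dotvDl x y z : dotv (x + y) z = dotv x z + dotv y z.
Proof. by rewrite /dotv -big_split; apply: eq_bigr => r _; rewrite mxE mulrDl. Qed.

Lemma dotvDr x y z : dotv z (x + y) = dotv z x + dotv z y.
Proof. by rewrite dotvC dotvDl !(dotvC z). Qed.

Lemma dotvZl a x y : dotv (a *: x) y = a * dotv x y.
Proof. by rewrite /dotv mulr_sumr; apply: eq_bigr => r _; rewrite mxE mulrA. Qed.

Lemma dotvZr a x y : dotv y (a *: x) = a * dotv y x.
Proof. by rewrite dotvC dotvZl dotvC. Qed.

Lemma dotvNl x y : dotv (- x) y = - dotv x y.
Proof. by rewrite -scaleN1r dotvZl mulN1r. Qed.

Lemma dotvNr x y : dotv y (- x) = - dotv y x.
Proof. by rewrite dotvC dotvNl dotvC. Qed.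

Lemma dotvBl x y z : dotv (x - y) z = dotv x z - dotv y z.
Proof. by rewrite dotvDl dotvNl. Qed.

Lemma dotvBr x y z : dotv z (x - y) = dotv z x - dotv z y.
Proof. by rewrite dotvDr dotvNr. Qed.

Lemma dotv0l x : dotv 0 x = 0.
Proof. by rewrite -(scale0r 0) dotvZl mul0r. Qed.

Lemma dotv_suml m (w : 'I_m -> 'cV[R]_d) y :
  dotv (\sum_(j < m) w j) y = \sum_(j < m) dotv (w j) y.
Proof.
rewrite /dotv exchange_big /=; apply: eq_bigr => r _.
by rewrite summxE mulr_suml.
Qed.

Lemma dotv_sumr m (w : 'I_m -> 'cV[R]_d) y :
  dotv y (\sum_(j < m) w j) = \sum_(j < m) dotv y (w j).
Proof. by rewrite dotvC dotv_suml; apply: eq_bigr => j _; rewrite dotvC. Qed.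

Lemma dotv_ge0 x : 0 <= dotv x x.
Proof. by apply: sumr_ge0 => r _; rewrite -expr2 sqr_ge0. Qed.

Lemma dotv_sq x : dotv x x = \sum_(r < d) x r ord0 ^+ 2.
Proof. by apply: eq_bigr => r _; rewrite expr2. Qed.

Lemma dotv_CS x y : dotv x y ^+ 2 <= dotv x x * dotv y y.
Proof. by rewrite !dotv_sq; exact: cauchy_schwarz. Qed.

Lemma dotv_eq0 x : dotv x x = 0 -> x = 0.
Proof.
move=> h; apply/matrixP => r c; rewrite (ord1 c) mxE.
have /psumr_eq0P H : \sum_(r < d) x r ord0 ^+ 2 = 0.
  by rewrite -dotv_sq h.
have := H (fun i _ => sqr_ge0 (x i ord0)) r isT.
by move/eqP; rewrite sqrf_eq0 => /eqP.
Qed.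

Lemma dotv_2le x y : 2 * dotv x y <= dotv x x + dotv y y.
Proof.
have := dotv_ge0 (x - y); rewrite !dotvBl !dotvBr (dotvC y x); lra.
Qed.

Lemma nrm_add2 x y : dotv (x + y) (x + y) <= 2 * dotv x x + 2 * dotv y y.
Proof.
rewrite !dotvDl !dotvDr (dotvC y x); have := dotv_2le x y; lra.
Qed.

Lemma nrm_sum m (w : 'I_m -> 'cV[R]_d) :
  dotv (\sum_(j < m) w j) (\sum_(j < m) w j) <= m%:R * \sum_(j < m) dotv (w j) (w j).
Proof.
rewrite dotv_sq.
under eq_bigr do rewrite summxE.
under [X in _ <= _ * X]eq_bigr do rewrite dotv_sq.
rewrite exchange_big /= mulr_sumr; apply: ler_sum => r _.
exact: sum_sq_le.
Qed.

Lemma dotvMV (V : 'M[R]_d) x y : dotv x (V *m y) = dotv (V^T *m x) y.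
Proof.
rewrite /dotv.
under eq_bigr do rewrite mxE mulr_sumr.
under [RHS]eq_bigr do rewrite mxE mulr_suml.
rewrite exchange_big /=; apply: eq_bigr => r _; apply: eq_bigr => c _.
by rewrite mxE; ring.
Qed.

Definition LVof (V : 'M[R]_d) := \sum_(r < d) \sum_(c < d) V r c ^+ 2.

Lemma LV_ge0 V : 0 <= LVof V.
Proof. by apply: sumr_ge0 => r _; apply: sumr_ge0 => c _; apply: sqr_ge0. Qed.

Lemma nrmMV (V : 'M[R]_d) z : dotv (V *m z) (V *m z) <= LVof V * dotv z z.
Proof.
rewrite dotv_sq /LVof mulr_suml; apply: ler_sum => r _.
rewrite mxE dotv_sq.
exact: (cauchy_schwarz (fun c : 'I_d => V r c) (fun c => z c ord0)).
Qed.

End Dot.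

Section Soft.
Variable R : realType.

Lemma exp_lip (a b K : R) : `|a| <= K -> `|b| <= K ->
  `|expR a - expR b| <= expR K * `|a - b|.
Proof.
move=> ha hb.
have ea : expR a <= expR K by rewrite ler_expR; move: ha => /ler_normlP [].
have eb : expR b <= expR K by rewrite ler_expR; move: hb => /ler_normlP [].
have h1 : expR a * (1 + (b - a)) <= expR b.
  have := expR_ge1Dx (b - a); rewrite -(ler_pM2l (expR_gt0 a)) -expRD.
  by have -> : a + (b - a) = b by ring.
have h2 : expR b * (1 + (a - b)) <= expR a.
  have := expR_ge1Dx (a - b); rewrite -(ler_pM2l (expR_gt0 b)) -expRD.
  by have -> : b + (a - b) = a by ring.
have pa := expR_gt0 a; have pb := expR_gt0 b.
case: (lerP b a) => hab.
  rewrite ger0_norm; first by nra.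
  by rewrite subr_ge0 ler_expR.
rewrite ltr0_norm; first by nra.
by rewrite subr_lt0 ltr_expR.
Qed.

Lemma sum_exp_gt0 m (al : 'I_m -> R) : (0 < m)%N -> 0 < \sum_(j < m) expR (al j).
Proof.
move=> m0; rewrite (bigD1 (Ordinal m0)) //=.
apply: (lt_le_trans (expR_gt0 (al (Ordinal m0)))).
rewrite lerDl; apply: sumr_ge0 => j _; exact: ltW (expR_gt0 _).
Qed.

Lemma sum_exp_ge m (al : 'I_m -> R) K : (0 < m)%N -> (forall j, `|al j| <= K) ->
  expR (- K) <= \sum_(j < m) expR (al j).
Proof.
move=> m0 hK; rewrite (bigD1 (Ordinal m0)) //=.
apply: (le_trans (y := expR (al (Ordinal m0)))).
  by rewrite ler_expR; have /ler_normlP [] := hK (Ordinal m0); lra.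
rewrite lerDl; apply: sumr_ge0 => j _; exact: ltW (expR_gt0 _).
Qed.

Lemma wsum_le m (w al : 'I_m -> R) : (forall j, `|w j| <= 1) ->
  `|\sum_(j < m) w j * expR (al j)| <= \sum_(j < m) expR (al j).
Proof.
move=> hw; apply: (le_trans (ler_norm_sum _ _ _)); apply: ler_sum => j _.
rewrite normrM (gtr0_norm (expR_gt0 _)) ler_piMl //; exact: ltW (expR_gt0 _).
Qed.

Definition softavg m (w al : 'I_m -> R) :=
  (\sum_(j < m) w j * expR (al j)) / \sum_(j < m) expR (al j).

Lemma softavg_le1 m (w al : 'I_m -> R) : (0 < m)%N -> (forall j, `|w j| <= 1) ->
  `|softavg w al| <= 1.
Proof.
move=> m0 hw; rewrite /softavg normrM normfV (gtr0_norm (sum_exp_gt0 al m0)).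
rewrite ler_pdivrMr ?mul1r ?sum_exp_gt0 //; exact: wsum_le.
Qed.

Lemma softavg_lip m (w al ah : 'I_m -> R) K : (0 < m)%N ->
  (forall j, `|w j| <= 1) -> (forall j, `|al j| <= K) -> (forall j, `|ah j| <= K) ->
  (softavg w al - softavg w ah) ^+ 2 <=
  (2 * expR K * expR K) ^+ 2 * m%:R * \sum_(j < m) (al j - ah j) ^+ 2.
Proof.
move=> m0 hw hal hah.
set Z := \sum_(j < m) expR (al j); set Zh := \sum_(j < m) expR (ah j).
set N := \sum_(j < m) w j * expR (al j); set Nh := \sum_(j < m) w j * expR (ah j).
set Dl := \sum_(j < m) `|expR (al j) - expR (ah j)|.
have Zp : 0 < Z by exact: sum_exp_gt0.
have Zhp : 0 < Zh by exact: sum_exp_gt0.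
have Zge : expR (- K) <= Z by exact: sum_exp_ge.
have hN : `|N - Nh| <= Dl.
  rewrite /N /Nh -sumrB; apply: (le_trans (ler_norm_sum _ _ _)); apply: ler_sum => j _.
  rewrite -mulrBr normrM ler_piMl //.
have hZ : `|Z - Zh| <= Dl.
  by rewrite /Z /Zh -sumrB; apply: (le_trans (ler_norm_sum _ _ _)).
have hS : `|Nh / Zh| <= 1 by exact: softavg_le1.
have E : softavg w al - softavg w ah = ((N - Nh) + (Nh / Zh) * (Zh - Z)) / Z.
  rewrite /softavg -/Z -/Zh -/N -/Nh; field.
  by apply/andP; split; rewrite gt_eqF.
have hDl : Dl <= expR K * \sum_(j < m) `|al j - ah j|.
  rewrite mulr_sumr; apply: ler_sum => j _; exact: exp_lip.
have hnum : `|(N - Nh) + (Nh / Zh) * (Zh - Z)| <= 2 * Dl.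
  apply: (le_trans (ler_normD _ _)); rewrite normrM.
  have : `|Nh / Zh| * `|Zh - Z| <= `|Zh - Z|.
    by rewrite ler_piMl.
  rewrite distrC; lra.
have hinv : Z^-1 <= expR K.
  rewrite -(invrK (expR K)) -expRN ler_pV2 ?inE ?unitfE ?gt_eqF ?expR_gt0 //.
have habs : `|softavg w al - softavg w ah| <= 2 * expR K * expR K * \sum_(j < m) `|al j - ah j|.
  rewrite E normrM normfV (gtr0_norm Zp).
  have hs0 : 0 <= \sum_(j < m) `|al j - ah j| by apply: sumr_ge0.
  have eK := expR_gt0 K.
  have hz0 : 0 < Z^-1 by rewrite invr_gt0.
  apply: (le_trans (y := 2 * Dl * Z^-1)).
    by rewrite ler_pM2r.
  apply: (le_trans (y := 2 * Dl * expR K)).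
    apply: ler_pM => //; first by apply: mulr_ge0 => //; apply: sumr_ge0.
    exact: ltW.
  have hD0 : 0 <= Dl by apply: sumr_ge0.
  nra.
have hsq := sum_sq_le (fun j => `|al j - ah j|).
have -> : \sum_(j < m) (al j - ah j) ^+ 2 = \sum_(j < m) `|al j - ah j| ^+ 2.
  by apply: eq_bigr => j _; rewrite real_normK // num_real.
have hs0 : 0 <= \sum_(j < m) `|al j - ah j| by apply: sumr_ge0.
have eK := expR_gt0 K.
set s := \sum_(j < m) `|al j - ah j| in habs hs0 hsq *.
set q := \sum_(j < m) `|al j - ah j| ^+ 2 in hsq *.
set c := 2 * expR K * expR K in habs *.
have c0 : 0 <= c by rewrite /c; nra.
have : (softavg w al - softavg w ah) ^+ 2 <= (c * s) ^+ 2.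
  rewrite -real_normK ?num_real //; apply: lerXn2r => //; rewrite ?nnegrE //.
  by apply: mulr_ge0.
move=> h; apply: (le_trans h); rewrite exprMn -mulrA ler_pM2l //.
  by rewrite exprn_gt0 // lt_def; apply/andP; split => //; rewrite /c; nra.
Qed.

End Soft.

Local Open Scope classical_set_scope.

Section Tanh.
Variable R : realType.

Lemma sum_sign n (s : 'I_n -> R) (F : R -> R) :
  (forall i, s i = 1 \/ s i = -1) ->
  \sum_(j < n) F (s j) =
  #|[set i | s i == 1]%SET|%:R * F 1 + #|[set i | s i == -1]%SET|%:R * F (-1).
Proof.
move=> hs; rewrite (bigID (fun j => s j == 1)) /=; congr (_ + _).
  rewrite (eq_bigr (fun _ => F 1)); last by move=> j /eqP ->.
  rewrite (eq_bigl (fun j => j \in [set i | s i == 1]%SET)); last by move=> j; rewrite inE.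
  by rewrite sumr_const mulr_natl.
have n2 : (-1 : R) != 1 by rewrite -subr_eq0 -opprD oppr_eq0 (_ : 1 + 1 = 2 :> R) ?pnatr_eq0.
rewrite (eq_bigr (fun _ => F (-1))); last first.
  by move=> j; case: (hs j) => -> //; rewrite eqxx.
rewrite (eq_bigl (fun j => j \in [set i | s i == -1]%SET)); last first.
  move=> j; rewrite inE; case: (hs j) => ->; first by rewrite eqxx /= eq_sym (negbTE n2).
  by rewrite eqxx /= (negbTE n2).
by rewrite sumr_const mulr_natl.
Qed.

Lemma softavg_tanh n (s : 'I_n -> R) (sg b : R) :
  (0 < n)%N ->
  (forall i, s i = 1 \/ s i = -1) ->
  #|[set i | s i == 1]%SET| = #|[set i | s i == -1]%SET| ->
  sg = 1 \/ sg = -1 ->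
  softavg (fun j => sg * s j) (fun j => sg * s j * b) = tanh b.
Proof.
move=> n0 hs hc hsg.
have p0 : (0 < #|[set i | s i == 1%R]%SET|)%N.
  case: (hs (Ordinal n0)) => h.
    by apply/card_gt0P; exists (Ordinal n0); rewrite inE h.
  by rewrite hc; apply/card_gt0P; exists (Ordinal n0); rewrite inE h.
rewrite /softavg (sum_sign (fun v => sg * v * expR (sg * v * b)) hs).
rewrite (sum_sign (fun v => expR (sg * v * b)) hs) -hc.
have pp : 0 < #|[set i | s i == 1%R]%SET|%:R :> R by rewrite ltr0n.
rewrite /tanh; case: hsg => ->.
  have -> : 1 * 1 * b = b by ring.
  have -> : 1 * -1 * b = - b by ring.
  field.
  by apply/andP; split; rewrite gt_eqF //; apply: addr_gt0; rewrite ?mulr_gt0 ?expR_gt0.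
have -> : -1 * 1 * b = - b by ring.
have -> : -1 * -1 * b = b by ring.
field.
by apply/andP; split; rewrite gt_eqF //; apply: addr_gt0; rewrite ?mulr_gt0 ?expR_gt0.
Qed.

End Tanh.

Section Key.
Variables (R : realType) (d n : nat) (beta : R) (V : 'M[R]_d) (s : 'I_n -> R).
Hypothesis hs : forall i, s i = 1 \/ s i = -1.

Lemma ss i : s i * s i = 1.
Proof. by case: (hs i) => ->; rewrite ?mulr1 ?mulrNN ?mulr1. Qed.

Lemma abs_s i : `|s i| <= 1.
Proof. by case: (hs i) => ->; rewrite ?normrN normr1. Qed.

Definition Hy (y : 'I_n -> 'cV[R]_d) i :=
  s i *: attn_rhs beta V (fun j => s j *: y j) i.

Definition al (y : 'I_n -> 'cV[R]_d) i j :=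
  (s i * s j) * (beta * dotv (y i) (V *m y j)).

Definition Zv y i := \sum_(j < n) expR (al y i j).

Definition Kv y i :=
  \sum_(j < n) (expR (al y i j) / Zv y i * (s i * s j)) *: (V *m y j).

Lemma Hy_form y i : Hy y i = proj_perp (y i) (Kv y i).
Proof.
have ex j : beta * dotv (s i *: y i) (V *m (s j *: y j)) = al y i j.
  by rewrite /al -scalemxAr dotvZl dotvZr; ring.
rewrite /Hy /attn_rhs /attn_Z /proj_perp.
under eq_bigr do rewrite ex.
rewrite (eq_bigr (fun j => expR (al y i j) *: (V *m (s j *: y j)))); last by move=> j _; rewrite ex.
rewrite -/(Zv y i).
set G := (Zv y i)^-1 *: _.
have KG : Kv y i = s i *: G.
  rewrite /G /Kv scalerA scaler_sumr; apply: eq_bigr => j _.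
  by rewrite -scalemxAr !scalerA; congr (_ *: _); ring.
rewrite KG scalerBr !scalerA dotvZl dotvZr; congr (_ - _).
congr (_ *: _); rewrite dotvZr; have h := ss i.
set g := dotv _ _.
transitivity ((s i * s i) * (s i * ((Zv y i)^-1 * g))); first by ring.
by rewrite h mul1r mulrA.
Qed.

Lemma nrmZ (a : R) (z : 'cV[R]_d) : dotv (a *: z) (a *: z) = a ^+ 2 * dotv z z.
Proof. by rewrite dotvZl dotvZr mulrA expr2. Qed.

Lemma e_le_Z y i j : expR (al y i j) <= Zv y i.
Proof.
rewrite /Zv (bigD1 j) //= lerDl; apply: sumr_ge0 => k _; exact: ltW (expR_gt0 _).
Qed.

Lemma Z_gt0 y i : 0 < Zv y i.
Proof. exact: lt_le_trans (expR_gt0 _) (e_le_Z y i i). Qed.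

Definition qc y i j := expR (al y i j) / Zv y i * (s i * s j).

Lemma abs_c i j : `|s i * s j| = 1.
Proof. by case: (hs i) => ->; case: (hs j) => ->; rewrite ?mulr1 ?mulrN1 ?mulN1r ?normrN ?opprK normr1. Qed.

Lemma q_le1 y i j : `|qc y i j| <= 1.
Proof.
rewrite /qc normrM abs_c mulr1 normrM normfV (gtr0_norm (expR_gt0 _)).
rewrite (gtr0_norm (Z_gt0 y i)) ler_pdivrMr ?Z_gt0 // mul1r; exact: e_le_Z.
Qed.

Lemma sum_q y i : \sum_(j < n) qc y i j = softavg (fun j => s i * s j) (al y i).
Proof.
rewrite /softavg mulr_suml; apply: eq_bigr => j _; rewrite /qc; ring.
Qed.

Lemma Kv_decomp y i (u : 'cV[R]_d) (T : R) :
  Kv y i - T *: (V *m u) =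
  \sum_(j < n) qc y i j *: (V *m (y j - u)) +
  (softavg (fun j => s i * s j) (al y i) - T) *: (V *m u).
Proof.
under [X in _ = X + _]eq_bigr do rewrite mulmxBr scalerBr.
rewrite sumrB -scaler_suml sum_q scalerBl.
by rewrite addrA subrK.
Qed.

Lemma q_sq y i j : qc y i j ^+ 2 <= 1.
Proof.
rewrite -real_normK ?num_real // -(expr1n _ 2) lerXn2r ?nnegrE //; exact: q_le1.
Qed.

Lemma VMnrm (z : 'cV[R]_d) : dotv z z = 1 -> dotv (V *m z) (V *m z) <= LVof V.
Proof. by move=> h; have := nrmMV V z; rewrite h mulr1. Qed.

Lemma K_nrm y i : (forall j, dotv (y j) (y j) = 1) ->
  dotv (Kv y i) (Kv y i) <= n%:R * (n%:R * LVof V).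
Proof.
move=> hy; apply: (le_trans (nrm_sum _)); rewrite ler_wpM2l ?ler0n //.
apply: (le_trans (y := \sum_(j < n) LVof V)); last by rewrite sumc_ord mulr_natl.
apply: ler_sum => j _; change (expR (al y i j) / Zv y i * (s i * s j)) with (qc y i j); rewrite nrmZ.
have := q_sq y i j; have := VMnrm (hy j); have := dotv_ge0 (V *m y j).
have := sqr_ge0 (qc y i j); nra.
Qed.

Lemma a_sq (y z : 'cV[R]_d) : dotv y y = 1 -> dotv z z = 1 ->
  dotv y (V *m z) ^+ 2 <= LVof V.
Proof.
move=> hy hz; apply: (le_trans (dotv_CS _ _)); rewrite hy mul1r; exact: VMnrm.
Qed.

Lemma abs_le_sq (a Q : R) : 0 <= Q -> a ^+ 2 <= Q -> `|a| <= 1 + Q.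
Proof.
move=> hQ ha; have := real_normK (num_real a); have := normr_ge0 a; nra.
Qed.

Lemma c_sq i j : (s i * s j) ^+ 2 = 1.
Proof. by rewrite -real_normK ?num_real // abs_c expr1n. Qed.

Definition Kb := 1 + beta ^+ 2 * LVof V.

Lemma al_abs y i j : (forall j, dotv (y j) (y j) = 1) -> `|al y i j| <= Kb.
Proof.
move=> hy; apply: abs_le_sq; first by apply: mulr_ge0; [exact: sqr_ge0 | exact: LV_ge0].
rewrite /al exprMn c_sq mul1r exprMn ler_wpM2l ?sqr_ge0 //; exact: a_sq.
Qed.

Lemma diff_a (y : 'I_n -> 'cV[R]_d) i j (u : 'cV[R]_d) :
  (forall j, dotv (y j) (y j) = 1) -> dotv u u = 1 ->
  (dotv (y i) (V *m y j) - dotv u (V *m u)) ^+ 2 <=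
  2 * LVof V * dotv (y i - u) (y i - u) + 2 * LVof V * dotv (y j - u) (y j - u).
Proof.
move=> hy hu.
have -> : dotv (y i) (V *m y j) - dotv u (V *m u) =
    dotv (y i - u) (V *m y j) + dotv u (V *m (y j - u)).
  by rewrite dotvBl mulmxBr dotvBr; ring.
set p := dotv (y i - u) _; set q := dotv u _.
have hp : p ^+ 2 <= dotv (y i - u) (y i - u) * LVof V.
  apply: (le_trans (dotv_CS _ _)); apply: ler_wpM2l; first exact: dotv_ge0.
  exact: VMnrm.
have hq : q ^+ 2 <= LVof V * dotv (y j - u) (y j - u).
  apply: (le_trans (dotv_CS _ _)); rewrite hu mul1r; exact: nrmMV.
have := sqr_ge0 (p - q); nra.
Qed.

Lemma al_diff y i j u :
  (al y i j - al (fun _ => u) i j) ^+ 2 =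
  beta ^+ 2 * (dotv (y i) (V *m y j) - dotv u (V *m u)) ^+ 2.
Proof.
rewrite /al.
have -> : s i * s j * (beta * dotv (y i) (V *m y j)) -
          s i * s j * (beta * dotv u (V *m u)) =
          (s i * s j) * (beta * (dotv (y i) (V *m y j) - dotv u (V *m u))) by ring.
by rewrite exprMn c_sq mul1r exprMn.
Qed.

Definition Wu (y : 'I_n -> 'cV[R]_d) (u : 'cV[R]_d) :=
  \sum_(j < n) dotv (y j - u) (y j - u).

Lemma Wu_ge0 y u : 0 <= Wu y u.
Proof. by apply: sumr_ge0 => j _; exact: dotv_ge0. Qed.

Lemma Wu_ge y u i : dotv (y i - u) (y i - u) <= Wu y u.
Proof.
rewrite /Wu (bigD1 i) //= lerDl; apply: sumr_ge0 => j _; exact: dotv_ge0.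
Qed.

Definition cS := (2 * expR Kb * expR Kb) ^+ 2.

Definition CK := 2 * n%:R * LVof V +
  2 * LVof V * (cS * n%:R * (beta ^+ 2 * (2 * LVof V * (n%:R + 1)))).

Lemma ST_bound y i u : (0 < n)%N ->
  (forall j, dotv (y j) (y j) = 1) -> dotv u u = 1 ->
  (softavg (fun j => s i * s j) (al y i) -
   softavg (fun j => s i * s j) (al (fun _ => u) i)) ^+ 2 <=
  cS * n%:R * (beta ^+ 2 * (2 * LVof V * (n%:R + 1))) * Wu y u.
Proof.
move=> n0 hy hu.
apply: (le_trans (softavg_lip n0 _ _ _)); first by move=> j; rewrite abs_c.
- by move=> j; exact: al_abs.
- by move=> j; apply: al_abs => k.
change ((2 * expR Kb * expR Kb) ^+ 2) with cS.
rewrite -[X in X <= _]mulrA -[X in _ <= X]mulrA -[X in _ <= X]mulrA.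
apply: ler_wpM2l; first by rewrite /cS; exact: sqr_ge0.
apply: ler_wpM2l; first exact: ler0n.
apply: (le_trans (y := \sum_(j < n) beta ^+ 2 *
   (2 * LVof V * dotv (y i - u) (y i - u) + 2 * LVof V * dotv (y j - u) (y j - u)))).
  apply: ler_sum => j _; rewrite al_diff ler_wpM2l ?sqr_ge0 //; exact: diff_a.
rewrite -mulr_sumr -[X in _ <= X]mulrA; apply: ler_wpM2l; first exact: sqr_ge0.
rewrite big_split /= sumc_ord -mulr_sumr.
have hL := LV_ge0 V; have hW := Wu_ge0 y u; have hi := Wu_ge y u i.
rewrite -[_ *+ n]mulr_natl -/(Wu y u).
have hn : 0 <= n%:R :> R by exact: ler0n.
have := ler_wpM2l (mulr_ge0 hL hn) hi; nra.
Qed.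

Lemma nrmN (z : 'cV[R]_d) : dotv (- z) (- z) = dotv z z.
Proof. by rewrite dotvNl dotvNr opprK. Qed.

Lemma nrmB2 (a b : 'cV[R]_d) : dotv (a - b) (a - b) <= 2 * dotv a a + 2 * dotv b b.
Proof. by have := nrm_add2 a (- b); rewrite nrmN. Qed.

Lemma K_close y i u : (0 < n)%N ->
  (forall j, dotv (y j) (y j) = 1) -> dotv u u = 1 ->
  dotv (Kv y i - softavg (fun j => s i * s j) (al (fun _ => u) i) *: (V *m u))
       (Kv y i - softavg (fun j => s i * s j) (al (fun _ => u) i) *: (V *m u))
  <= CK * Wu y u.
Proof.
move=> n0 hy hu; rewrite Kv_decomp.
apply: (le_trans (nrm_add2 _ _)).
have hL := LV_ge0 V; have hW := Wu_ge0 y u; have hn : 0 <= n%:R :> R by exact: ler0n.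
have h1 : dotv (\sum_(j < n) qc y i j *: (V *m (y j - u)))
               (\sum_(j < n) qc y i j *: (V *m (y j - u))) <= n%:R * (LVof V * Wu y u).
  apply: (le_trans (nrm_sum _)); apply: ler_wpM2l => //.
  rewrite /Wu mulr_sumr; apply: ler_sum => j _; rewrite nrmZ.
  have := q_sq y i j; have := nrmMV V (y j - u); have := dotv_ge0 (V *m (y j - u)).
  have := sqr_ge0 (qc y i j); have := dotv_ge0 (y j - u); nra.
have h2 := ST_bound i n0 hy hu.
set S := softavg _ _ in h2 *; set T := softavg _ _ in h2 *.
have h3 : dotv ((S - T) *: (V *m u)) ((S - T) *: (V *m u)) <=
    LVof V * (cS * n%:R * (beta ^+ 2 * (2 * LVof V * (n%:R + 1))) * Wu y u).
  rewrite nrmZ mulrC; apply: ler_pM => //; [exact: dotv_ge0 | exact: sqr_ge0 | exact: VMnrm].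
rewrite /CK.
set X := cS * n%:R * (beta ^+ 2 * (2 * LVof V * (n%:R + 1))) in h2 h3 *.
nra.
Qed.

Lemma proj_close (y u K Kh : 'cV[R]_d) (LK : R) :
  dotv y y = 1 -> dotv u u = 1 -> dotv K K <= LK ->
  dotv (proj_perp y K - proj_perp u Kh) (proj_perp y K - proj_perp u Kh) <=
  16 * dotv (K - Kh) (K - Kh) + 16 * LK * dotv (y - u) (y - u).
Proof.
move=> hy hu hK.
have -> : proj_perp y K - proj_perp u Kh =
  (K - Kh) + ((- dotv y K) *: (y - u)) + ((- dotv (y - u) K) *: u) +
  ((- dotv u (K - Kh)) *: u).
  rewrite /proj_perp !dotvBl !dotvBr; apply/matrixP => r c; rewrite !mxE; ring.
set A := K - Kh; set B := (- dotv y K) *: (y - u);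
set C := (- dotv (y - u) K) *: u; set D := (- dotv u (K - Kh)) *: u.
have e1 := nrm_add2 (A + B + C) D; have e2 := nrm_add2 (A + B) C.
have e3 := nrm_add2 A B.
have hB : dotv B B <= LK * dotv (y - u) (y - u).
  rewrite /B nrmZ sqrrN; apply: ler_wpM2r; first exact: dotv_ge0.
  apply: (le_trans (dotv_CS _ _)); by rewrite hy mul1r.
have hC : dotv C C <= LK * dotv (y - u) (y - u).
  rewrite /C nrmZ sqrrN hu mulr1 mulrC; apply: (le_trans (dotv_CS _ _)).
  apply: ler_wpM2l; [exact: dotv_ge0 | exact: hK].
have hD : dotv D D <= dotv A A.
  rewrite /D nrmZ sqrrN hu mulr1; apply: (le_trans (dotv_CS _ _)); by rewrite hu mul1r.
have := dotv_ge0 A; have := dotv_ge0 B; have := dotv_ge0 C; have := dotv_ge0 D.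
have := dotv_ge0 (A + B); have := dotv_ge0 (A + B + C).
lra.
Qed.

Definition LKc := n%:R * (n%:R * LVof V).
Definition CH := 16 * CK + 16 * LKc.

Lemma T_tanh u i : (0 < n)%N ->
  #|[set i | s i == 1]%SET| = #|[set i | s i == -1]%SET| ->
  softavg (fun j => s i * s j) (al (fun _ => u) i) = tanh (beta * dotv u (V *m u)).
Proof. by move=> n0 hc; apply: softavg_tanh. Qed.

Lemma H_close y i u : (0 < n)%N ->
  #|[set i | s i == 1]%SET| = #|[set i | s i == -1]%SET| ->
  (forall j, dotv (y j) (y j) = 1) -> dotv u u = 1 ->
  dotv (Hy y i - proj_perp u (tanh (beta * dotv u (V *m u)) *: (V *m u)))
       (Hy y i - proj_perp u (tanh (beta * dotv u (V *m u)) *: (V *m u)))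
   <= CH * Wu y u.
Proof.
move=> n0 hc hy hu.
rewrite Hy_form -(T_tanh u i n0 hc).
apply: (le_trans (proj_close _ (hy i) hu (K_nrm i hy))).
have := K_close i n0 hy hu; have := Wu_ge y u i; rewrite /CH -/LKc.
have : 0 <= LKc by rewrite /LKc; apply: mulr_ge0; [exact: ler0n | apply: mulr_ge0; [exact: ler0n | exact: LV_ge0]].
nra.
Qed.

Lemma H_exact u i : (0 < n)%N ->
  #|[set i | s i == 1]%SET| = #|[set i | s i == -1]%SET| ->
  Hy (fun _ => u) i = proj_perp u (tanh (beta * dotv u (V *m u)) *: (V *m u)).
Proof.
move=> n0 hc; rewrite Hy_form -(T_tanh u i n0 hc); congr proj_perp.
apply/eqP; rewrite -subr_eq0 Kv_decomp.
have -> : \sum_(j < n) qc (fun _ => u) i j *: (V *m (u - u)) = 0.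
  by apply: big1 => j _; rewrite subrr mulmx0 scaler0.
by rewrite add0r subrr scale0r.
Qed.

Lemma key_static i0 : (0 < n)%N ->
  #|[set i | s i == 1]%SET| = #|[set i | s i == -1]%SET| ->
  exists C : R, 0 <= C /\ forall y, (forall j, dotv (y j) (y j) = 1) ->
  \sum_(j < n) dotv (Hy y j - Hy y i0) (Hy y j - Hy y i0) <= C * Wu y (y i0).
Proof.
move=> n0 hc; exists `|n%:R * (4 * CH)|; split; first exact: normr_ge0.
move=> y hy; set u := y i0.
set Hh := proj_perp u (tanh (beta * dotv u (V *m u)) *: (V *m u)).
have hu : dotv u u = 1 by exact: hy.
have hW := Wu_ge0 y u.
have hj : forall j, dotv (Hy y j - Hy y i0) (Hy y j - Hy y i0) <= 4 * CH * Wu y u.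
  move=> j.
  have E : (Hy y j - Hh) - (Hy y i0 - Hh) = Hy y j - Hy y i0.
    by apply/matrixP => r c; rewrite !mxE; ring.
  rewrite -E; apply: (le_trans (nrmB2 _ _)).
  have := H_close j n0 hc hy hu; have := H_close i0 n0 hc hy hu.
  rewrite -/Hh; lra.
apply: (le_trans (y := \sum_(j < n) 4 * CH * Wu y u)); first exact: ler_sum.
rewrite sumc_ord -[_ *+ n]mulr_natl.
have -> : n%:R * (4 * CH * Wu y u) = (n%:R * (4 * CH)) * Wu y u by ring.
apply: ler_wpM2r => //; exact: ler_norm.
Qed.

End Key.

Section Deriv.
Variable R : realType.
Implicit Types f g : R -> R.

Lemma dsum m (h : 'I_m -> R -> R) (dh : 'I_m -> R) (t : R) :
  (forall j, is_derive t 1 (h j) (dh j)) ->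
  is_derive t 1 (fun z => \sum_(j < m) h j z) (\sum_(j < m) dh j).
Proof.
move=> H; have -> : (fun z => \sum_(j < m) h j z) = \sum_(j < m) h j.
  by apply/funext => z; rewrite fct_sumE.
exact: is_derive_sum.
Qed.

Lemma dsq f (df t : R) : is_derive t 1 f df ->
  is_derive t 1 (fun z => f z ^+ 2) (2 * f t * df).
Proof.
move=> H; have K := is_deriveM H H.
have -> : (fun z => f z ^+ 2) = f * f by apply/funext => z; rewrite expr2.
have -> : 2 * f t * df = f t *: df + f t *: df by rewrite /GRing.scale /=; ring.
exact: K.
Qed.

Lemma dlin f g (a b p q t : R) : is_derive t 1 f a -> is_derive t 1 g b ->
  is_derive t 1 (fun z => p * f z - q * g z) (p * a - q * b).
Proof.
move=> Hf Hg.
have K := is_deriveB (is_deriveZ p Hf) (is_deriveZ q Hg).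
have -> : (fun z => p * f z - q * g z) = (p \*: f) - (q \*: g) by [].
exact: K.
Qed.

Lemma dscale f (a p t : R) : is_derive t 1 f a ->
  is_derive t 1 (fun z => p * f z) (p * a).
Proof.
move=> Hf; have K := is_deriveZ p Hf.
have -> : (fun z => p * f z) = (p \*: f) by [].
exact: K.
Qed.

Lemma cvg_sumL m (h : 'I_m -> R -> R) (l : 'I_m -> R) (F : set_system R)
  {FF : Filter F} :
  (forall j, h j @ F --> l j) ->
  (fun z => \sum_(j < m) h j z) @ F --> \sum_(j < m) l j.
Proof.
elim: m h l => [|m IH] h l H.
  under eq_fun do rewrite big_ord0.
  rewrite big_ord0; exact: cvg_cst.
under eq_fun do rewrite big_ord_recr /=.
rewrite big_ord_recr /=.
apply: cvgD; last exact: H.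
exact: (IH (fun j => h (widen_ord (leqnSn m) j))).
Qed.

Lemma gronwall (W W' : R -> R) (C : R) :
  0 <= C ->
  (forall t : R, 0 < t -> is_derive t 1 W (W' t)) ->
  (forall t : R, 0 < t -> W' t <= C * W t) ->
  (forall t : R, 0 <= t -> 0 <= W t) ->
  W @ 0^'+ --> W 0 -> W 0 = 0 ->
  forall t : R, 0 <= t -> W t = 0.
Proof.
move=> C0 dW hW' W0 cW W00 t; rewrite le_eqVlt => /predU1P [<- // | t0].
pose g := fun z => W z * expR (- C * z).
have dg : forall z : R, 0 < z -> is_derive z 1 g
   (W z *: (expR (- C * z) * (- C)) + expR (- C * z) *: W' z).
  move=> z z0.
  have de : is_derive z 1 (fun z : R => expR (- C * z)) (expR (- C * z) * (- C)).
    have -> : (fun z => expR (- C * z)) = expR \o (fun z => - C * z) by [].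
    apply: is_derive1_comp.
    have K := dscale (- C) (is_derive_id z (1 : R)); rewrite mulr1 in K.
    exact: K.
  have K := is_deriveM (dW z z0) de; exact: K.
have dgle : forall z : R, 0 < z -> 'D_1 g z <= 0.
  move=> z z0; rewrite (@derive_val _ _ _ _ _ _ _ (dg z z0)).
  have := hW' z z0; have := W0 z (ltW z0); have := expR_gt0 (- C * z).
  rewrite /GRing.scale /=; nra.
have mono : {in `]0, t + 1[%R &, {homo g : x y /~ x <= y}}.
  apply: (@ler0_derive1_le_oo R g 0 (t + 1)).
  - move=> z; rewrite in_itv /= => /andP [z0 _].
    by case: (dg z z0).
  - move=> z; rewrite in_itv /= => /andP [z0 _].
    by rewrite derive1E dgle.
  - move=> z; rewrite ?inE /= ?in_itv /=.
    move=> /andP [z0 _].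
    apply: differentiable_continuous; rewrite -derivable1_diffP.
    by case: (dg z z0).
have key : forall z : R, 0 < z -> z <= t -> g t <= W z.
  move=> z z0 zt.
  have := mono t z; rewrite !in_itv /= z0 t0 /=.
  have zt1 : z < t + 1 by lra.
  have tt1 : t < t + 1 by lra.
  rewrite zt1 tt1 => /(_ isT isT zt) h.
  apply: (le_trans h); rewrite /g.
  have : expR (- C * z) <= 1 by rewrite expR_le1; nra.
  have := W0 z (ltW z0); have := expR_gt0 (- C * z); nra.
have gt0 : g t <= 0.
  rewrite -W00; apply: (cvgr_to_ge cW); near=> z.
  apply: key.
    by near: z; exact: nbhs_right_gt.
  by near: z; exact: nbhs_right_ltW.
have := W0 t (ltW t0); have := expR_gt0 (- C * t); rewrite /g in gt0; nra.
Unshelve. all: by end_near.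
Qed.

End Deriv.

Section Basis.
Variables (R : realType) (d : nat) (e : 'I_d -> 'cV[R]_d).
Hypothesis he : forall k l : 'I_d, dotv (e k) (e l) = (k == l)%:R.

Lemma basis_expand (z : 'cV[R]_d) : z = \sum_(l < d) dotv (e l) z *: e l.
Proof.
pose E := \matrix_(r < d, l < d) e l r ord0.
have h1 : E^T *m E = 1%:M.
  apply/matrixP => k l; rewrite !mxE -he /dotv; apply: eq_bigr => r _.
  by rewrite !mxE.
have h2 := mulmx1C h1.
have hz : z = E *m (E^T *m z) by rewrite mulmxA h2 mul1mx.
rewrite {1}hz.
apply/matrixP => r c; rewrite (ord1 c) summxE !mxE; apply: eq_bigr => l _.
rewrite !mxE /dotv mulrC; congr (_ * _); apply: eq_bigr => q _; by rewrite !mxE.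
Qed.

Lemma eig_dot (V : 'M[R]_d) (lam : 'I_d -> R) k (z : 'cV[R]_d) :
  V^T = V -> V *m e k = lam k *: e k ->
  dotv (e k) (V *m z) = lam k * dotv (e k) z.
Proof.
by move=> hV hk; rewrite dotvMV hV hk dotvZl.
Qed.

Lemma quad_form (V : 'M[R]_d) (lam : 'I_d -> R) (z : 'cV[R]_d) :
  V^T = V -> (forall k, V *m e k = lam k *: e k) ->
  dotv z (V *m z) = \sum_(l < d) lam l * dotv (e l) z ^+ 2.
Proof.
move=> hV hk; rewrite {1}(basis_expand z) dotv_suml; apply: eq_bigr => l _.
by rewrite dotvZl (eig_dot _ hV (hk l)); ring.
Qed.

End Basis.

End Aux.
Import Aux.
Local Open Scope classical_set_scope.

Theorem proposition4p3 (R : realType) (n d : nat) (beta : R)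
  (V : 'M[R]_d) (e : 'I_d -> 'cV[R]_d) (lam : 'I_d -> R)
  (s : 'I_n -> R) (u0 : 'cV[R]_d) (x : R -> 'I_n -> 'cV[R]_d) :
  0 < beta ->
  V^T = V ->
  (forall k l : 'I_d, dotv (e k) (e l) = (k == l)%:R) ->
  (forall k : 'I_d, V *m e k = lam k *: e k) ->
  (forall i, s i = 1 \/ s i = -1) ->
  #|[set i | s i == 1]%SET| = #|[set i | s i == -1]%SET| ->
  on_sphere u0 ->
  (forall i, x 0 i = s i *: u0) ->
  (forall t : R, 0 <= t -> forall i, on_sphere (x t i)) ->
  (forall i (r : 'I_d),
     (fun t : R => x t i r ord0) @ 0^'+ --> x 0 i r ord0) ->
  (forall t : R, 0 < t -> forall i (r : 'I_d),
     is_derive t 1 (fun tau => x tau i r ord0) (attn_rhs beta V (x t) i r ord0)) ->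
  exists u : R -> 'cV[R]_d,
    (forall t : R, 0 <= t -> on_sphere (u t) /\ forall i, x t i = s i *: u t) /\
    (forall t : R, 0 < t -> forall k : 'I_d,
       let M := \sum_(l < d) lam l * (dotv (e l) (u t)) ^+ 2 in
       is_derive t 1 (fun tau => dotv (e k) (u tau))
         (dotv (e k) (u t) * tanh (beta * M) * (lam k - M))).
Proof.
move=> hb hV he hVe hs hc hu0 hx0 hsph hcont hder.
have [n0 | n0] := posnP n.
  have d0 : (0 < d)%N.
    case: (posnP d) => // d0'; exfalso; move: hu0; subst d.
    by rewrite /on_sphere /dotv big_ord0 => /eqP; rewrite eq_sym oner_eq0.
  pose k0 := Ordinal d0.
  exists (fun _ => e k0); split.
    move=> t _; split; first by rewrite /on_sphere he eqxx.
    by move=> i; exfalso; have := ltn_ord i; move: (nat_of_ord i) => m; rewrite n0.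
  move=> t _ k M.
  have HM : M = lam k0.
    rewrite /M (bigD1 k0) //= he eqxx expr1n mulr1 big1 ?addr0 // => l hl.
    by rewrite he (negbTE hl) expr2 mulr0 mulr0.
  have -> : dotv (e k) (e k0) * tanh (beta * M) * (lam k - M) = 0.
    rewrite HM he; case: (eqVneq k k0) => [->|nk]; first by rewrite subrr mulr0.
    by rewrite !mul0r.
  have K := is_derive_cst (dotv (e k) (e k0)) t (1 : R); exact: K.
pose i0 := Ordinal n0.
have [C [C0 hC]] := key_static beta V hs i0 n0 hc.
have ss1 : forall j, s j * s j = 1 := ss hs.
pose yt t j := s j *: x t j.
pose u t := yt t i0.
have hyt : forall t j, s j *: yt t j = x t j.
  by move=> t j; rewrite /yt scalerA ss1 scale1r.
have xtE : forall t, (fun k => s k *: yt t k) = x t.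
  by move=> t; apply/funext => k; rewrite hyt.
have unit_yt : forall t : R, 0 <= t -> forall j, dotv (yt t j) (yt t j) = 1.
  move=> t t0 j; rewrite /yt nrmZ expr2 ss1 mul1r; exact: hsph.
pose Wf t := \sum_(j < n) \sum_(r < d) (s j * x t j r ord0 - s i0 * x t i0 r ord0) ^+ 2.
have WE : forall t, Wu (yt t) (u t) = Wf t.
  move=> t; rewrite /Wu; apply: eq_bigr => j _; rewrite dotv_sq; apply: eq_bigr => r _.
  by rewrite !mxE.
pose F (t : R) (j : 'I_n) (r : 'I_d) : R := attn_rhs beta V (x t) j r ord0.
pose Wd t := \sum_(j < n) \sum_(r < d) 2 * (s j * x t j r ord0 - s i0 * x t i0 r ord0) *
   (s j * F t j r - s i0 * F t i0 r).
have dWf : forall t : R, 0 < t -> is_derive t 1 Wf (Wd t).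
  move=> t t0; apply: dsum => j; apply: dsum => r; apply: dsq.
  have K := dlin (s j) (s i0) (hder t t0 j r) (hder t t0 i0 r); exact: K.
have WdE : forall t : R, Wd t = 2 * \sum_(j < n)
    dotv (yt t j - u t) (Hy beta V s (yt t) j - Hy beta V s (yt t) i0).
  move=> t; rewrite mulr_sumr; apply: eq_bigr => j _.
  rewrite /Hy xtE /dotv mulr_sumr; apply: eq_bigr => r _; rewrite /F; set A := attn_rhs beta V (x t); rewrite !mxE; ring.
have Wd_le : forall t : R, 0 < t -> Wd t <= (1 + C) * Wf t.
  move=> t t0; rewrite WdE -WE.
  have hy := unit_yt t (ltW t0).
  have := hC (yt t) hy; rewrite -/(u t) => hk.
  rewrite [X in _ <= X]mulrDl mul1r mulr_sumr.
  apply: (le_trans (y := \sum_(j < n) (dotv (yt t j - u t) (yt t j - u t) +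
     dotv (Hy beta V s (yt t) j - Hy beta V s (yt t) i0)
          (Hy beta V s (yt t) j - Hy beta V s (yt t) i0)))).
    by apply: ler_sum => j _; exact: dotv_2le.
  by rewrite big_split /= -/(Wu (yt t) (u t)) lerD2l.
have cWf : Wf @ 0^'+ --> Wf 0.
  apply: cvg_sumL => j; apply: cvg_sumL => r.
  have c1 : (fun z : R => s j * x z j r ord0) @ 0^'+ --> s j * x 0 j r ord0.
    by apply: cvgMl_tmp; exact: hcont.
  have c2 : (fun z : R => s i0 * x z i0 r ord0) @ 0^'+ --> s i0 * x 0 i0 r ord0.
    by apply: cvgMl_tmp; exact: hcont.
  have c3 : (fun z : R => s j * x z j r ord0 - s i0 * x z i0 r ord0) @ 0^'+ -->
      (s j * x 0 j r ord0 - s i0 * x 0 i0 r ord0).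
    exact: (cvgB c1 c2).
  have c4 := cvgM c3 c3.
  rewrite expr2.
  have -> : (fun z : R => (s j * x z j r ord0 - s i0 * x z i0 r ord0) ^+ 2) =
    (fun z : R => (s j * x z j r ord0 - s i0 * x z i0 r ord0) *
                  (s j * x z j r ord0 - s i0 * x z i0 r ord0)).
    by apply/funext => z; rewrite expr2.
  exact: c4.
have W00 : Wf 0 = 0.
  rewrite -WE /Wu; apply: big1 => j _.
  by rewrite /u /yt !hx0 !scalerA !ss1 !scale1r subrr dotv0l.
have Wge0 : forall t : R, 0 <= t -> 0 <= Wf t.
  by move=> t _; rewrite -WE; exact: Wu_ge0.
have C1 : 0 <= 1 + C by lra.
have Wz := gronwall C1 dWf Wd_le Wge0 cWf W00.
have yeq : forall t : R, 0 <= t -> forall j, yt t j = u t.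
  move=> t t0 j.
  have hW : Wu (yt t) (u t) = 0 by rewrite WE Wz.
  have := @psumr_eq0P R _ xpredT (fun j => dotv (yt t j - u t) (yt t j - u t)) (fun j _ => dotv_ge0 _) hW j isT.
  by move/dotv_eq0/eqP; rewrite subr_eq0 => /eqP.
exists u; split.
  move=> t t0; split; first exact: (unit_yt t t0 i0).
  by move=> i; rewrite -(hyt t i) yeq.
move=> t t0 k M.
have ytE : yt t = (fun _ => u t) by apply/funext => j; rewrite yeq // ltW.
have FE : (fun tau : R => dotv (e k) (u tau)) =
    (fun z : R => s i0 * \sum_(r < d) e k r ord0 * x z i0 r ord0).
  by apply/funext => z; rewrite /u /yt dotvZr.
have K := dscale (s i0) (dsum (fun r => dscale (e k r ord0) (hder t t0 i0 r))).
rewrite FE.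
suff -> : dotv (e k) (u t) * tanh (beta * M) * (lam k - M) =
    s i0 * \sum_(r < d) e k r ord0 * attn_rhs beta V (x t) i0 r ord0 by exact: K.
have -> : s i0 * \sum_(r < d) e k r ord0 * attn_rhs beta V (x t) i0 r ord0 =
    dotv (e k) (Hy beta V s (yt t) i0) by rewrite /Hy xtE dotvZr.
rewrite ytE (H_exact beta V hs (u t) i0 n0 hc).
have QM : dotv (u t) (V *m u t) = M by rewrite /M (quad_form he (u t) hV hVe).
rewrite /proj_perp dotvBr !dotvZr (eig_dot (u t) hV (hVe k)) QM /u /yt ?dotvZr; ring.
Qed.
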